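(* In the setting below, $d(V)\subseteq V$, and the cochain complex $V$ is acyclic (has zero cohomology).
   Context: A complex subspace arrangement in $\mathbb{C}^l$ is a finite set of complex linear subspaces of $\mathbb{C}^l$ with no two distinct members $x\subset y$. For a finite set $\mathcal{C}$ of linear subspaces of a complex vector space $W$ with a linear order, $D(\mathcal{C})$ is the cochain complex over $\mathbb{Q}$ with basis all subsets $\sigma\subseteq\mathcal{C}$, where with $\vee\sigma=\bigcap_{x\in\sigma}x$ ($\vee\emptyset=W$), $\deg\sigma=2\operatorname{codim}_W(\vee\sigma)-|\sigma|$ and for $\sigma=\{x_{i_1},\dots,x_{i_r}\}$ in increasing order, $d\sigma=\sum_{j:\vee(\sigma\setminus\{x_{i_j}\})=\vee\sigma}(-1)^j(\sigma\setminus\{x_{i_j}\})$. Setting: $\mathcal{A}=\{x_0,\dots,x_n\}$ is a complex subspace arrangement in $\mathbb{C}^l$, $\mathcal{A}'=\mathcal{A}\setminus\{x_0\}$; on $\mathcal{A}'$, $y\sim z$ iff $x_0\cap y=x_0\cap z$, with classes $\mathcal{A}_1,\dots,\mathcal{A}_r$; the linear order is $x_0<x_1<\dots<x_n$ with elements of $\mathcal{A}_i$ preceding elements of $\mathcal{A}_j$ whenever $i<j$. $D(\mathcal{A}')$ is the subcomplex of $D(\mathcal{A})$ spanned by subsets not containing $x_0$. $E=\{(y,z)\in\mathcal{A}'\times\mathcal{A}'\mid y\sim z,\ y\ne z\}$. For $(u,v)\in E$, $I_{u,v}$ is the subspace of the quotient complex $D(\mathcal{A})/D(\mathcal{A}')$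 spanned by the classes of all $\{x_0,u\}\cup Y-\{x_0,v\}\cup Y$ and all $\{x_0,u,v\}\cup Y$, for $Y\subseteq\mathcal{A}\setminus\{x_0,u,v\}$, and $V=\sum_{(u,v)\in E}I_{u,v}$. *)

(* Defs.v *)
From HB Require Import structures.
From mathcomp Require Import all_boot all_order all_algebra.
From mathcomp Require Import complex Rstruct.
Set Implicit Arguments. Unset Strict Implicit. Unset Printing Implicit Defensive.
Import GRing.Theory.
Local Open Scope ring_scope.

Definition Cplx : fieldType := Rdefinitions.R[i].

(* A linear subspace of C^l is represented (mxalgebra style) by a square
   matrix 'M[Cplx]_l whose row space is the subspace; subspace equality is
   (_ == _)%MS, inclusion (_ <= _)%MS, intersection (_ :&: _)%MS. *)

(* A = {x_0, ..., x_n} indexed by 'I_n.+1 (so the linear order is the index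
   order); it is a subspace arrangement: distinct members, none contained in
   another. *)
Definition is_arrangement (l n : nat) (x : 'I_n.+1 -> 'M[Cplx]_l) : Prop :=
  forall i j : 'I_n.+1, i != j -> ~~ (x i <= x j)%MS.

(* \/sigma = intersection of the members of sigma (the full space C^l for the
   empty set: the unit of \bigcap is 1%:M). *)
Definition meet (l n : nat) (x : 'I_n.+1 -> 'M[Cplx]_l) (s : {set 'I_n.+1})
  : 'M[Cplx]_l := (\bigcap_(i in s) x i)%MS.

Definition codim (l : nat) (M : 'M[Cplx]_l) : nat := (l - \rank M)%N.

Definition deg (l n : nat) (x : 'I_n.+1 -> 'M[Cplx]_l) (s : {set 'I_n.+1}) : int :=
  ((2 * codim (meet x s))%N)%:Z - (#|s|)%:Z.

(* the position j (1-based) of i in sigma listed in increasing order *)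
Definition pos (n : nat) (i : 'I_n.+1) (s : {set 'I_n.+1}) : nat :=
  #|[set k in s | (k <= i)%N]|.

(* D(A): the Q-vector space with basis the subsets of A *)
Definition cochain (n : nat) := {ffun {set 'I_n.+1} -> rat^o}.

Definition ebasis (n : nat) (s : {set 'I_n.+1}) : cochain n :=
  [ffun t => (t == s)%:R].

Definition dbasis (l n : nat) (x : 'I_n.+1 -> 'M[Cplx]_l) (s : {set 'I_n.+1})
  : cochain n :=
  \sum_(i in s | (meet x (s :\ i) == meet x s)%MS)
     ((-1) ^+ pos i s) *: ebasis (s :\ i).

Definition dD (l n : nat) (x : 'I_n.+1 -> 'M[Cplx]_l) (f : cochain n) : cochain n :=
  \sum_(s : {set 'I_n.+1}) f s *: dbasis x s.

Definition homog (l n : nat) (x : 'I_n.+1 -> 'M[Cplx]_l) (k : int) (f : cochain n)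
  : Prop := forall s, f s != 0 -> deg x s = k.

Definition DAprime (n : nat) : {vspace cochain n} :=
  (\sum_(s : {set 'I_n.+1} | ord0 \notin s) <[ebasis s]>)%VS.

Definition simA (l n : nat) (x : 'I_n.+1 -> 'M[Cplx]_l) (y z : 'I_n.+1) : bool :=
  (x ord0 :&: x y == x ord0 :&: x z)%MS.

Definition inE_ (l n : nat) (x : 'I_n.+1 -> 'M[Cplx]_l) (u v : 'I_n.+1) : bool :=
  [&& u != ord0, v != ord0, u != v & simA x u v].

(* I_{u,v}, lifted to D(A): span of representatives of its generators *)
Definition Iuv (l n : nat) (x : 'I_n.+1 -> 'M[Cplx]_l) (u v : 'I_n.+1)
  : {vspace cochain n} :=
  (\sum_(Y : {set 'I_n.+1} | Y \subset ~: [set ord0; u; v])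
     (<[ebasis (ord0 |: (u |: Y)) - ebasis (ord0 |: (v |: Y))]>
      + <[ebasis (ord0 |: (u |: (v |: Y)))]>))%VS.

(* Vhat = preimage in D(A) of V = sum_{(u,v) in E} I_{u,v} under the quotient
   map D(A) -> D(A)/D(A'):   Vhat = sum I_{u,v} + D(A').
   A class [f] of D(A)/D(A') lies in V  iff  f \in Vhat. *)
Definition Vhat (l n : nat) (x : 'I_n.+1 -> 'M[Cplx]_l) : {vspace cochain n} :=
  ((\sum_(u : 'I_n.+1) \sum_(v : 'I_n.+1 | inE_ x u v) Iuv x u v) + DAprime n)%VS.

(* Main.v *)
Require Import Defs.
From HB Require Import structures.
From mathcomp Require Import all_boot all_order all_algebra.
From mathcomp Require Import complex Rstruct.
From mathcomp Require Import ring.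

Module P1.
Set Implicit Arguments. Unset Strict Implicit. Unset Printing Implicit Defensive.
Import GRing.Theory.
Local Open Scope ring_scope.

Section Lin.
Variable n : nat.
Notation I := ('I_n.+1).
Notation cc := (cochain n).

Definition lin (B : {set I} -> cc) (f : cc) : cc := \sum_s f s *: B s.

Lemma linD B f g : lin B (f + g) = lin B f + lin B g.
Proof. by rewrite /lin -big_split; apply: eq_bigr => s _; rewrite ffunE scalerDl. Qed.
Lemma linZ B a f : lin B (a *: f) = a *: lin B f.
Proof. by rewrite /lin scaler_sumr; apply: eq_bigr => s _; rewrite ffunE scalerA. Qed.
Lemma lin0 B : lin B 0 = 0.
Proof. by rewrite /lin big1 // => s _; rewrite ffunE scale0r. Qed.
Lemma linN B f : lin B (- f) = - lin B f.
Proof. by rewrite -scaleN1r linZ scaleN1r. Qed.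
Lemma linB B f g : lin B (f - g) = lin B f - lin B g.
Proof. by rewrite linD linN. Qed.
Lemma lin_sum B (J : Type) (r : seq J) (P : pred J) (F : J -> cc) :
  lin B (\sum_(j <- r | P j) F j) = \sum_(j <- r | P j) lin B (F j).
Proof.
elim/big_rec2: _ => [|j y1 y2 _ <-]; first exact: lin0.
by rewrite linD.
Qed.
Lemma ebasisE (s t : {set I}) : ebasis s t = (t == s)%:R.
Proof. by rewrite ffunE. Qed.
Lemma lin_e B (s : {set I}) : lin B (ebasis s) = B s.
Proof.
rewrite /lin (bigD1 s) //= big1 ?addr0 => [|t Hts]; first by rewrite ebasisE eqxx scale1r.
by rewrite ebasisE (negbTE Hts) scale0r.
Qed.
Lemma lin_eq B C f : (forall s, B s = C s) -> lin B f = lin C f.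
Proof. by move=> H; apply: eq_bigr => s _; rewrite H. Qed.
Lemma lin_comp B C f : lin B (lin C f) = lin (fun s => lin B (C s)) f.
Proof. by rewrite {1}[lin C f]/lin lin_sum; apply: eq_bigr => s _; rewrite linZ. Qed.
Lemma lin_id f : lin (@ebasis n) f = f.
Proof.
apply/ffunP => t; rewrite /lin sum_ffunE (bigD1 t) //= big1 ?addr0.
  by rewrite !ffunE eqxx; exact: mulr1.
by move=> s Hs; rewrite !ffunE eq_sym (negbTE Hs); exact: mulr0.
Qed.

Definition inD (f : cc) := forall s : {set I}, ord0 \in s -> f s = 0.

Lemma inD0 : inD 0. Proof. by move=> s _; rewrite ffunE. Qed.
Lemma inDD f g : inD f -> inD g -> inD (f + g).
Proof. by move=> Hf Hg s Hs; rewrite ffunE Hf // Hg // addr0. Qed.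
Lemma inDZ a f : inD f -> inD (a *: f).
Proof. by move=> Hf s Hs; rewrite ffunE Hf // scaler0. Qed.
Lemma inDN f : inD f -> inD (- f).
Proof. by move=> Hf s Hs; rewrite ffunE Hf // oppr0. Qed.
Lemma inDB f g : inD f -> inD g -> inD (f - g).
Proof. by move=> Hf Hg; apply: inDD => //; apply: inDN. Qed.
Lemma inD_sum (J : Type) (r : seq J) (P : pred J) (F : J -> cc) :
  (forall j, P j -> inD (F j)) -> inD (\sum_(j <- r | P j) F j).
Proof.
move=> H; elim/big_rec: _ => [|j y Pj Hy]; first exact: inD0.
by apply: inDD => //; apply: H.
Qed.
Lemma inD_e (s : {set I}) : ord0 \notin s -> inD (ebasis s).
Proof. by move=> Hs t Ht; rewrite ebasisE; case: eqP => // Ets; by rewrite -Ets Ht in Hs. Qed.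
Lemma inD_lin (B : {set I} -> cc) f : inD f -> (forall s : {set I}, ord0 \notin s -> inD (B s)) -> inD (lin B f).
Proof.
move=> Hf HB; apply: inD_sum => s _.
case: (boolP (ord0 \in s)) => H0; first by rewrite Hf // scale0r; exact: inD0.
by apply: inDZ; apply: HB.
Qed.

Lemma DAprimeP f : f \in DAprime n <-> inD f.
Proof.
split.
  move/memv_sumP => [vs Hvs ->]; apply: inD_sum => s Hs.
  by case/vlineP: (Hvs s Hs) => k ->; apply: inDZ; apply: inD_e.
move=> Hf; rewrite -(lin_id f) /lin.
rewrite (bigID (fun s : {set I} => ord0 \notin s)) /= [X in _ + X]big1 ?addr0.
  by apply: memv_sumr => s Hs; apply: memvZ; apply: memv_line.
by move=> s; rewrite negbK => Hs; rewrite Hf // scale0r.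
Qed.

End Lin.

End P1.
Import P1.

Module P2.
Set Implicit Arguments. Unset Strict Implicit. Unset Printing Implicit Defensive.
Import GRing.Theory.
Local Open Scope ring_scope.

Definition sg (m : nat) : rat := (-1) ^+ m.

Lemma sgD a b : sg (a + b) = sg a * sg b. Proof. by rewrite /sg exprD. Qed.
Lemma sg1 : sg 1 = -1. Proof. by rewrite /sg expr1. Qed.
Lemma sgS a : sg a.+1 = - sg a. Proof. by rewrite -addn1 sgD sg1 mulrN1. Qed.
Lemma sgsq a : sg a * sg a = 1.
Proof. by rewrite -sgD addnn /sg -mul2n exprM sqrrN expr1n. Qed.

Section Pos.
Variable n : nat.
Notation I := ('I_n.+1).

Lemma posE (i : I) (s : {set I}) : pos i s = (\sum_(k in s) ((k <= i)%N : nat))%N.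
Proof.
rewrite /pos -sum1_card.
rewrite (eq_bigl (fun k => (k \in s) && (k <= i)%N)) => [|k]; last by rewrite inE.
rewrite big_mkcondr /=; apply: eq_bigr => k _; by case: leqP.
Qed.

Lemma posU (j i : I) (s : {set I}) : j \notin s -> pos i (j |: s) = (pos i s + (j <= i))%N.
Proof. by move=> Hj; rewrite !posE big_setU1 //= addnC. Qed.

Lemma posD (j i : I) (s : {set I}) : j \in s -> pos i s = (pos i (s :\ j) + (j <= i))%N.
Proof.
move=> Hj; rewrite -{1}(setD1K Hj) posU //; by rewrite setD11.
Qed.

Lemma pos_adj (m i : I) (s : {set I}) : (m < i)%N -> i \in s ->
  (forall k, k \in s -> (m < k < i)%N -> False) -> pos i s = (pos m s).+1.
Proof.
move=> Hmi His Hk; rewrite !posE.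
have -> : (\sum_(k in s) ((k <= i)%N : nat) =
           \sum_(k in s) ((k <= m)%N : nat) + \sum_(k in s) ((m < k <= i)%N : nat))%N.
  rewrite -big_split /=; apply: eq_bigr => k _.
  case: (leqP k m) => Hkm /=.
    by rewrite (leq_trans Hkm (ltnW Hmi)).
  by [].
suff -> : (\sum_(k in s) ((m < k <= i)%N : nat))%N = 1%N by rewrite addn1.
rewrite (bigD1 i) //= leqnn Hmi big1 ?addn0 //.
move=> k /andP [Hks Hki]; case: (ltnP m k) => //= Hmk.
case: (ltnP k i) => Hki' /=.
  by case: (Hk k Hks); rewrite Hmk.
have Hik : (i < k)%N.
  rewrite ltn_neqAle Hki' andbT; apply/eqP => H.
  by move: Hki; rewrite (val_inj H) eqxx.
by rewrite leqNgt Hik.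
Qed.

Lemma sign_cone (m i : I) (s : {set I}) : m \notin s -> i \in s -> i != m ->
  sg (pos m (m |: s)) * sg (pos i (m |: s)) +
  sg (pos i s) * sg (pos m (m |: (s :\ i))) = 0.
Proof.
move=> Hm Hi Him.
have Hm' : m \notin s :\ i by rewrite !inE negb_and Hm orbT.
rewrite posU // posU // posU // (posD m Hi) leqnn.
have : ((i <= m) + (m <= i))%N = 1%N.
  case: (ltngtP i m) => //= Heq; by move: Him; rewrite (val_inj Heq) eqxx.
move=> H.
rewrite !sgD sg1.
have Hd : sg (m <= i)%N = - sg (i <= m)%N.
  have H2 : sg (i <= m)%N * sg (m <= i)%N = -1 by rewrite -sgD H sg1.
  by rewrite -[LHS]mul1r -(sgsq (i <= m)%N) -mulrA H2 mulrN1.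
rewrite Hd.
transitivity (sg (pos m (s :\ i)) * sg (pos i s) * (sg (i <= m)%N * sg (i <= m)%N - 1)).
  ring.
by rewrite sgsq subrr mulr0.
Qed.

Lemma sg_swap (i j : I) : i != j -> sg (j <= i)%N = - sg (i <= j)%N.
Proof.
move=> Hij.
have H : ((i <= j) + (j <= i))%N = 1%N.
  case: (ltngtP i j) => //= Heq; by move: Hij; rewrite (val_inj Heq) eqxx.
have H2 : sg (i <= j)%N * sg (j <= i)%N = -1 by rewrite -sgD H sg1.
by rewrite -[LHS]mul1r -(sgsq (i <= j)%N) -mulrA H2 mulrN1.
Qed.

Lemma sign_dd (i j : I) (s : {set I}) : i \in s -> j \in s -> i != j ->
  sg (pos i s) * sg (pos j (s :\ i)) = - (sg (pos j s) * sg (pos i (s :\ j))).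
Proof.
move=> Hi Hj Hij.
rewrite (posD j Hi) (posD i Hj) !sgD (sg_swap Hij); ring.
Qed.

End Pos.

End P2.
Import P2.

Module P3.
Set Implicit Arguments. Unset Strict Implicit. Unset Printing Implicit Defensive.
Import GRing.Theory.
Local Open Scope ring_scope.

Section Setting.
Variables (l n : nat) (x : 'I_n.+1 -> 'M[Cplx]_l) (cls : 'I_n.+1 -> nat).
Hypothesis Hsim : forall y z : 'I_n.+1, y != ord0 -> z != ord0 ->
         (simA x y z <-> cls y = cls z).
Hypothesis Hmono : forall y z : 'I_n.+1, y != ord0 -> z != ord0 ->
         (y <= z)%N -> (cls y <= cls z)%N.
Notation I := ('I_n.+1).
Notation cc := (cochain n).
Notation o := (@ord0 n).

Definition Cl (c : nat) : {set I} := [set i : I | (i != o) && (cls i == c)].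

Definition mc (c : nat) : I :=
  if [pick i in Cl c] is Some i0 then [arg min_(i < i0 in Cl c) (i : nat)] else o.

Lemma mcP c : Cl c != set0 -> mc c \in Cl c /\ forall j, j \in Cl c -> (mc c <= j)%N.
Proof.
move=> H; rewrite /mc; case: pickP => [i0 Hi0|]; last first.
  by move=> H0; case/set0Pn: H => i; rewrite H0.
by case: arg_minnP => // i Hi Hmin; split.
Qed.

Lemma inCl c i : (i \in Cl c) = (i != o) && (cls i == c).
Proof. by rewrite inE. Qed.

Lemma Cl_block c (a b k : I) : a \in Cl c -> b \in Cl c -> (a < k)%N -> (k < b)%N -> k \in Cl c.
Proof.
rewrite !inCl => /andP [Ha /eqP Hca] /andP [Hb /eqP Hcb] Hak Hkb.
have Hk : k != o by apply/eqP => Hk; move: Hak; rewrite Hk.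
rewrite Hk /= eqn_leq; apply/andP; split.
  by rewrite -Hcb; apply: Hmono => //; exact: ltnW.
by rewrite -Hca; apply: Hmono => //; exact: ltnW.
Qed.

Lemma Cl_sim c (i j : I) : i \in Cl c -> j \in Cl c -> simA x i j.
Proof.
rewrite !inCl => /andP [Hi /eqP Hci] /andP [Hj /eqP Hcj].
by apply/(Hsim Hi Hj); rewrite Hci Hcj.
Qed.

Lemma Cl_ne0 c i : i \in Cl c -> i != o.
Proof. by rewrite inCl => /andP []. Qed.

Lemma meet_sub (s t : {set I}) : s \subset t -> (meet x t <= meet x s)%MS.
Proof.
move=> Hst; apply/sub_bigcapmxP => k Hk.
by apply: (bigcapmx_inf k); [exact: (subsetP Hst) | exact: submx_refl].
Qed.

Lemma meet_rem c (s : {set I}) (i j : I) : o \in s -> i \in s -> j \in s -> i != j ->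
  i \in Cl c -> j \in Cl c -> (meet x (s :\ i) == meet x s)%MS.
Proof.
move=> H0 Hi Hj Hij Hic Hjc; apply/andP; split; last by apply: meet_sub; exact: subD1set.
apply/sub_bigcapmxP => k Hk.
case: (eqVneq k i) => [->|Hki]; last first.
  by apply: (bigcapmx_inf k); [rewrite !inE Hki | exact: submx_refl].
have H1 : (meet x (s :\ i) <= x o :&: x j)%MS.
  rewrite sub_capmx; apply/andP; split.
    apply: (bigcapmx_inf o); last exact: submx_refl.
    by rewrite !inE H0 andbT eq_sym (Cl_ne0 Hic).
  by apply: (bigcapmx_inf j); [rewrite !inE Hj andbT eq_sym Hij | exact: submx_refl].
have := Cl_sim Hjc Hic; rewrite /simA => /andP [Hs _].
exact: (submx_trans H1 (submx_trans Hs (capmxSr _ _))).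
Qed.

End Setting.

End P3.
Import P3.

Module P4.
Set Implicit Arguments. Unset Strict Implicit. Unset Printing Implicit Defensive.
Import GRing.Theory.
Local Open Scope ring_scope.

Section Homog.
Variables (l n : nat) (x : 'I_n.+1 -> 'M[Cplx]_l).
Notation I := ('I_n.+1).
Notation cc := (cochain n).

Lemma homog0 k : homog x k 0.
Proof. by move=> s; rewrite ffunE eqxx. Qed.
Lemma homogD k f g : homog x k f -> homog x k g -> homog x k (f + g).
Proof.
move=> Hf Hg s; rewrite ffunE => H.
case: (eqVneq (f s) 0) => Hfs; last exact: Hf.
by apply: Hg; move: H; rewrite Hfs add0r.
Qed.
Lemma homogZ k a f : homog x k f -> homog x k (a *: f).
Proof.
move=> Hf s; rewrite ffunE => H; apply: Hf; apply/eqP => H0; move: H.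
by rewrite H0 scaler0 eqxx.
Qed.
Lemma homogN k f : homog x k f -> homog x k (- f).
Proof. by move=> H; rewrite -scaleN1r; apply: homogZ. Qed.
Lemma homogB k f g : homog x k f -> homog x k g -> homog x k (f - g).
Proof. by move=> Hf Hg; apply: homogD => //; apply: homogN. Qed.
Lemma homog_sum k (J : Type) (r : seq J) (P : pred J) (F : J -> cc) :
  (forall j, P j -> homog x k (F j)) -> homog x k (\sum_(j <- r | P j) F j).
Proof.
move=> H; elim/big_rec: _ => [|j y Pj Hy]; first exact: homog0.
by apply: homogD => //; apply: H.
Qed.
Lemma homog_e (s : {set I}) : homog x (deg x s) (ebasis s).
Proof. move=> t; rewrite ebasisE; case E: (t == s); [by rewrite (eqP E) | by rewrite eqxx]. Qed.
Lemma homog_lin k k' B f : homog x k f ->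
  (forall s, deg x s = k -> homog x k' (B s)) -> homog x k' (lin B f).
Proof.
move=> Hf HB; apply: homog_sum => s _.
case: (eqVneq (f s) 0) => Hs; first by rewrite Hs scale0r; exact: homog0.
by apply: homogZ; apply: HB; apply: Hf.
Qed.

End Homog.

Section D.
Variables (l n : nat) (x : 'I_n.+1 -> 'M[Cplx]_l).
Notation I := ('I_n.+1).
Notation cc := (cochain n).
Notation o := (@ord0 n).

Definition cond (s : {set I}) (i : I) := (meet x (s :\ i) == meet x s)%MS.
Definition dterm (s : {set I}) (i : I) : cc :=
  if cond s i then sg (pos i s) *: ebasis (s :\ i) else 0.

Lemma dbasisE (s : {set I}) : dbasis x s = \sum_(i in s) dterm s i.
Proof. by rewrite /dbasis big_mkcondr. Qed.

Lemma dD_e (s : {set I}) : dD x (ebasis s) = dbasis x s.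
Proof. exact: lin_e. Qed.

Lemma dDD f g : dD x (f + g) = dD x f + dD x g. Proof. exact: linD. Qed.
Lemma dDZ a f : dD x (a *: f) = a *: dD x f. Proof. exact: linZ. Qed.
Lemma dDB f g : dD x (f - g) = dD x f - dD x g. Proof. exact: linB. Qed.
Lemma dD_sum (J : Type) (r : seq J) (P : pred J) (F : J -> cc) :
  dD x (\sum_(j <- r | P j) F j) = \sum_(j <- r | P j) dD x (F j).
Proof. exact: lin_sum. Qed.
Lemma dD0 : dD x 0 = 0. Proof. exact: lin0. Qed.

Lemma deg_rem (s : {set I}) (i : I) : i \in s -> cond s i -> deg x (s :\ i) = deg x s + 1.
Proof.
move=> Hi Hc; rewrite /deg /codim (eqmx_rank Hc).
have := cardsD1 i s; rewrite Hi => ->.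
by rewrite add1n PoszD; ring.
Qed.

Lemma homog_dbasis (s : {set I}) : homog x (deg x s + 1) (dbasis x s).
Proof.
rewrite dbasisE; apply: homog_sum => i Hi; rewrite /dterm.
case: ifP => Hc; last exact: homog0.
by apply: homogZ; rewrite -(deg_rem Hi Hc); exact: homog_e.
Qed.

Lemma homog_dD k f : homog x k f -> homog x (k + 1) (dD x f).
Proof. by move=> Hf; apply: (homog_lin Hf) => s <-; exact: homog_dbasis. Qed.

Lemma inD_dbasis (s : {set I}) : o \notin s -> inD (dbasis x s).
Proof.
move=> Hs; rewrite dbasisE; apply: inD_sum => i _; rewrite /dterm.
case: ifP => _; last exact: inD0.
by apply: inDZ; apply: inD_e; rewrite !inE negb_and Hs orbT.
Qed.

Lemma inD_dD f : inD f -> inD (dD x f).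
Proof. move=> Hf; change (inD (lin (dbasis x) f)); apply: inD_lin => // s Hs; exact: inD_dbasis. Qed.

Lemma cond_pair (s : {set I}) (i j : I) :
  (cond s i && cond (s :\ i) j) = (meet x (s :\ i :\ j) == meet x s)%MS.
Proof.
have S1 : s :\ i \subset s by exact: subD1set.
have S2 : s :\ i :\ j \subset s :\ i by exact: subD1set.
have S3 : s :\ i :\ j \subset s by exact: (subset_trans S2 S1).
rewrite /cond; apply/idP/idP.
  case/andP => /andP [H1 H2] /andP [H3 H4]; apply/andP; split.
    exact: (submx_trans H3 H1).
  exact: meet_sub.
case/andP => Ha Hb; apply/andP; split; apply/andP; split.
- exact: (submx_trans (meet_sub x S2) Ha).
- exact: meet_sub.
- exact: (submx_trans Ha (meet_sub x S1)).
- exact: meet_sub.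
Qed.

Lemma setDD1C (s : {set I}) (i j : I) : s :\ i :\ j = s :\ j :\ i.
Proof. by apply/setP => k; rewrite !inE andbCA. Qed.

Lemma dd_basis (s : {set I}) : dD x (dbasis x s) = 0.
Proof.
pose F (i j : I) : cc :=
  if [&& i \in s, j \in s, i != j & cond s i && cond (s :\ i) j]
  then (sg (pos i s) * sg (pos j (s :\ i))) *: ebasis (s :\ i :\ j) else 0.
have E : dD x (dbasis x s) = \sum_i \sum_j F i j.
  rewrite dbasisE dD_sum big_mkcond /=; apply: eq_bigr => i _.
  case Hi: (i \in s); last first.
    by rewrite big1 // => j _; rewrite /F Hi.
  rewrite /dterm; case Hc: (cond s i); last first.
    rewrite (_ : dD x _ = 0); last exact: dD0.
    by rewrite big1 // => j _; rewrite /F Hi Hc /= !andbF.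
  rewrite dDZ dD_e dbasisE scaler_sumr big_mkcond /=; apply: eq_bigr => j _.
  rewrite /F /dterm Hi Hc !inE /=.
  case: (eqVneq j i) => [->|Hji] /=; first by rewrite andbF.
  case Hj: (j \in s) => //=.
  case: (cond (s :\ i) j) => //=; last by rewrite scaler0.
  by rewrite scalerA.
have Hsym : forall i j, F j i = - F i j.
  move=> i j; rewrite /F.
  case: (eqVneq i j) => [->|Hij] /=; first by rewrite !andbF oppr0.
  rewrite !cond_pair [s :\ j :\ i]setDD1C.
  case Hi: (i \in s); case Hj: (j \in s) => //=; try by rewrite oppr0.
  case: ifP => _; last by rewrite oppr0.
  by rewrite (sign_dd Hi Hj Hij) scaleNr opprK.
rewrite E; set X := \sum_i \sum_j F i j.
have HX : X = - X.
  rewrite {1}/X exchange_big /= -sumrN; apply: eq_bigr => j _.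
  rewrite -sumrN; apply: eq_bigr => i _; exact: Hsym.
have : X + X = 0 by rewrite {1}HX addNr.
rewrite -mulr2n -scaler_nat => /eqP; rewrite scaler_eq0 => /orP [|/eqP //].
by [].

Qed.

Lemma dd f : dD x (dD x f) = 0.
Proof.
change (lin (dbasis x) (lin (dbasis x) f) = 0).
rewrite lin_comp (lin_eq _ (fun s => dd_basis s)).
by rewrite /lin big1 // => s _; rewrite scaler0.
Qed.

End D.

End P4.
Import P4.

Module P5.
Set Implicit Arguments. Unset Strict Implicit. Unset Printing Implicit Defensive.
Import GRing.Theory.
Local Open Scope ring_scope.

Lemma eqmx_congr (F : fieldType) (k : nat) (A A' B B' : 'M[F]_k) :
  (A == A')%MS -> (B == B')%MS -> (A == B)%MS = (A' == B')%MS.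
Proof.
move=> /andP [H1 H2] /andP [H3 H4]; apply/idP/idP => /andP [H5 H6]; apply/andP; split.
- exact: (submx_trans H2 (submx_trans H5 H3)).
- exact: (submx_trans H4 (submx_trans H6 H1)).
- exact: (submx_trans H1 (submx_trans H5 H4)).
- exact: (submx_trans H3 (submx_trans H6 H2)).
Qed.

Lemma eqmx_symb (F : fieldType) (k : nat) (A B : 'M[F]_k) : (A == B)%MS = (B == A)%MS.
Proof. exact: andbC. Qed.

Section Homotopy.
Variables (l n : nat) (x : 'I_n.+1 -> 'M[Cplx]_l) (cls : 'I_n.+1 -> nat).
Hypothesis Hsim : forall y z : 'I_n.+1, y != ord0 -> z != ord0 ->
         (simA x y z <-> cls y = cls z).
Hypothesis Hmono : forall y z : 'I_n.+1, y != ord0 -> z != ord0 ->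
         (y <= z)%N -> (cls y <= cls z)%N.
Notation I := ('I_n.+1).
Notation cc := (cochain n).
Notation o := (@ord0 n).
Notation Cl := (Cl cls).
Notation mc := (mc cls).
Notation cond := (cond x).
Notation dterm := (dterm x).

Definition hb (c : nat) (s : {set I}) : cc :=
  if [&& o \in s, s :&: Cl c != set0 & mc c \notin s]
  then sg (pos (mc c) (mc c |: s)) *: ebasis (mc c |: s) else 0.

Definition qb (c : nat) (s : {set I}) : cc :=
  if o \notin s then ebasis s
  else if #|s :&: Cl c| == 0%N then ebasis s
  else if #|s :&: Cl c| == 1%N then ebasis (mc c |: (s :\: Cl c))
  else 0.

Definition H (c : nat) (f : cc) : cc := lin (hb c) f.

Lemma H_dterm c (s : {set I}) (i : I) :
  H c (dterm s i) = if cond s i then sg (pos i s) *: hb c (s :\ i) else 0.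
Proof.
rewrite /H /dterm; case: ifP => _; first by rewrite linZ lin_e.
exact: lin0.
Qed.

Lemma H_dbasis c (s : {set I}) : H c (dbasis x s) = \sum_(i in s) H c (dterm s i).
Proof. by rewrite dbasisE /H lin_sum. Qed.

Lemma hb0 c (t : {set I}) :
  (o \notin t) || (t :&: Cl c == set0) || (mc c \in t) -> hb c t = 0.
Proof.
rewrite /hb => H; case: ifP => // /and3P [H1 H2 H3].
by move: H; rewrite H1 (negbTE H2) (negbTE H3).
Qed.

Lemma hbE c (t : {set I}) : o \in t -> t :&: Cl c != set0 -> mc c \notin t ->
  hb c t = sg (pos (mc c) (mc c |: t)) *: ebasis (mc c |: t).
Proof. by move=> H1 H2 H3; rewrite /hb H1 H2 H3. Qed.

Lemma cond_ext c (s : {set I}) (m i j : I) : o \in s -> m \notin s -> m \in Cl c ->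
  j \in s -> j \in Cl c -> i \in s -> i != o -> i != j ->
  cond (m |: s) i = cond s i.
Proof.
move=> H0 Hm Hmc Hj Hjc Hi Hio Hij.
have Hjm : j != m by apply/eqP => E; rewrite -E Hj in Hm.
have sym : forall A B : 'M[Cplx]_l, (A == B)%MS -> (B == A)%MS.
  by move=> A B /andP [a b]; apply/andP.
rewrite /P4.cond; apply: eqmx_congr.
  have E : (m |: s) :\ i :\ m = s :\ i.
    by rewrite setDD1C setU1K.
  apply: sym; rewrite -E; apply: (meet_rem Hsim (j := j) (c := c)) => //.
  - by rewrite !inE eq_sym Hio H0 orbT.
  - rewrite !inE eqxx andbT; apply/eqP => E'; move: Hm; rewrite E'.
    by rewrite Hi.
  - rewrite !inE Hj orbT andbT; apply/eqP => E'; by move: Hij; rewrite E' eqxx.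
  - by apply/eqP => E'; move: Hjm; rewrite E' eqxx.
apply: sym; have := (meet_rem Hsim (s := m |: s) (i := m) (j := j) (c := c)).
rewrite setU1K //; apply.
- by rewrite !inE H0 orbT.
- by rewrite !inE eqxx.
- by rewrite !inE Hj orbT.
- by apply/eqP => E'; move: Hjm; rewrite E' eqxx.
- done.
- done.
Qed.

Definition G c (s : {set I}) (i : I) : cc :=
  sg (pos (mc c) (mc c |: s)) *: dterm (mc c |: s) i + H c (dterm s i).

Lemma G_o c (s : {set I}) : inD (G c s o).
Proof.
rewrite /G H_dterm hb0 ?scaler0; last by rewrite !inE eqxx.
rewrite /P4.dterm; case: ifP => _; rewrite ?scaler0 ?if_same ?addr0; last exact: inD0.
by apply: inDZ; apply: inDZ; apply: inD_e; rewrite !inE eqxx.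
Qed.

Lemma G_gen c (s : {set I}) (i : I) : o \in s -> mc c \notin s -> i \in s -> i != o ->
  cond (mc c |: s) i = cond s i -> (s :\ i) :&: Cl c != set0 -> G c s i = 0.
Proof.
move=> H0 Hm Hi Hio Hc HT.
have Hmi : mc c != i by apply/eqP => E; move: Hm; rewrite E Hi.
rewrite /G H_dterm /P4.dterm Hc; case: ifP => _; last by rewrite scaler0 addr0.
rewrite hbE //; last first.
- by rewrite !inE negb_and Hm orbT.
- by rewrite !inE eq_sym Hio.
have Es : mc c |: (s :\ i) = (mc c |: s) :\ i.
  apply/setP => k; rewrite !inE; case: (eqVneq k (mc c)) => [->|] //=.
  by rewrite Hmi.
rewrite !scalerA Es -scalerDl -Es sign_cone ?scale0r //.
by apply/eqP => E; move: Hmi; rewrite E eqxx.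
Qed.

Lemma G_special c (s : {set I}) (i : I) : o \in s -> mc c \notin s ->
  s :&: Cl c = [set i] -> G c s i = - ebasis ((mc c |: s) :\ i).
Proof.
move=> H0 Hm HT.
have Hi' : i \in s :&: Cl c by rewrite HT set11.
have Hi : i \in s by move: Hi'; rewrite in_setI => /andP [].
have Hic : i \in Cl c by move: Hi'; rewrite in_setI => /andP [].
have HCl : Cl c != set0 by apply/set0Pn; exists i.
have [Hmc Hmin] := mcP HCl.
have Hmi : mc c != i by apply/eqP => E; move: Hm; rewrite E Hi.
have HT' : (s :\ i) :&: Cl c = set0.
  apply/setP => k; rewrite in_set0 in_setI in_setD1.
  apply/negP => /andP [/andP [Hki Hks] Hkc].
  have : k \in s :&: Cl c by rewrite in_setI Hks Hkc.
  by rewrite HT in_set1 (negbTE Hki).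
rewrite /G H_dterm hb0; last by rewrite HT' eqxx orbT.
rewrite scaler0 if_same addr0 /P4.dterm.
have -> : cond (mc c |: s) i.
  rewrite /P4.cond; apply: (meet_rem Hsim (j := mc c) (c := c)) => //.
  - by rewrite !inE H0 orbT.
  - by rewrite !inE Hi orbT.
  - by rewrite !inE eqxx.
  - by apply/eqP => E; move: Hmi; rewrite E eqxx.
rewrite scalerA.
have Hlt : (mc c < i)%N.
  rewrite ltn_neqAle Hmin // andbT; apply/eqP => E; move: Hmi.
  by rewrite (val_inj E) eqxx.
rewrite (pos_adj Hlt) ?sgS ?mulrN ?sgsq ?scaleN1r //.
  by rewrite !inE Hi orbT.
move=> k; rewrite in_setU1 => Hk /andP [H1 H2].
have Hkc : k \in Cl c by apply: (Cl_block Hmono Hmc Hic H1 H2).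
have Hkm : k != mc c by apply/eqP => E; move: H1; rewrite E ltnn.
move: Hk; rewrite (negbTE Hkm) /= => Hks.
have : k \in s :&: Cl c by rewrite in_setI Hks Hkc.
rewrite HT in_set1 => /eqP E; move: H2; by rewrite E ltnn.
Qed.

Lemma G_inD c (s : {set I}) (i : I) : o \in s -> mc c \notin s -> i \in s ->
  s :&: Cl c != set0 -> s :&: Cl c != [set i] -> inD (G c s i).
Proof.
move=> H0 Hm Hi HT HTi.
case: (eqVneq i o) => [->|Hio]; first exact: G_o.
have [j Hj Hji] : exists2 j, j \in s :&: Cl c & j \notin [set i].
  apply/subsetPn; apply/negP => Hsub; move/negP: HTi; apply; rewrite eqEsubset Hsub /=.
  case/set0Pn: HT => k Hk; move: (subsetP Hsub k Hk); rewrite in_set1 => /eqP Ek.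
  by rewrite sub1set -Ek.
have HCl : Cl c != set0 by apply/set0Pn; exists j; move: Hj; rewrite in_setI => /andP [].
have [Hmc Hmin] := mcP HCl.
move: Hj; rewrite in_setI => /andP [Hjs Hjc].
have Hij : i != j by apply/eqP => E; move: Hji; rewrite E set11.
rewrite (G_gen H0 Hm Hi Hio); first exact: inD0.
  by apply: (cond_ext (c := c) (j := j)).
have Hji' : j != i by apply/eqP => E; move: Hij; rewrite E eqxx.
by apply/set0Pn; exists j; rewrite in_setI in_setD1 Hji' Hjs Hjc.
Qed.

End Homotopy.

End P5.
Import P5.

Module P6.
Set Implicit Arguments. Unset Strict Implicit. Unset Printing Implicit Defensive.
Import GRing.Theory.
Local Open Scope ring_scope.

Section Homot.
Variables (l n : nat) (x : 'I_n.+1 -> 'M[Cplx]_l) (cls : 'I_n.+1 -> nat).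
Hypothesis Hsim : forall y z : 'I_n.+1, y != ord0 -> z != ord0 ->
         (simA x y z <-> cls y = cls z).
Hypothesis Hmono : forall y z : 'I_n.+1, y != ord0 -> z != ord0 ->
         (y <= z)%N -> (cls y <= cls z)%N.
Notation I := ('I_n.+1).
Notation cc := (cochain n).
Notation o := (@ord0 n).
Notation Cl := (Cl cls).
Notation mc := (mc cls).
Notation cond := (cond x).
Notation dterm := (dterm x).
Notation hb := (hb cls).
Notation qb := (qb cls).
Notation H := (H cls).
Notation G := (G x cls).

Lemma other_elt (T : {set I}) (m : I) : m \in T -> #|T| != 1%N -> exists2 j, j \in T & j != m.
Proof.
move=> Hm H1.
have : ~~ (T \subset [set m]).
  apply/negP => Hs; move: H1.
  have -> : T = [set m] by apply/eqP; rewrite eqEsubset Hs sub1set Hm.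
  by rewrite cards1.
by case/subsetPn => j Hj; rewrite in_set1 => Hjm; exists j.
Qed.

Lemma homot c (s : {set I}) : inD (dD x (hb c s) + H c (dbasis x s) - (ebasis s - qb c s)).
Proof.
case H0: (o \in s); last first.
  rewrite hb0 ?H0 // /qb H0 /= subrr subr0 dD0 add0r H_dbasis.
  apply: inD_sum => i _; rewrite H_dterm hb0 ?scaler0 ?if_same; first exact: inD0.
  by rewrite !inE H0 andbF.
have HsubT : forall i, (s :\ i) :&: Cl c \subset s :&: Cl c.
  by move=> i; apply: setSI; exact: subD1set.
case: (eqVneq (s :&: Cl c) set0) => HT.
  rewrite hb0; last by rewrite HT eqxx orbT.
  rewrite /qb H0 /= HT cards0 /= subrr subr0 dD0 add0r H_dbasis.
  apply: inD_sum => i _; rewrite H_dterm hb0 ?scaler0 ?if_same; first exact: inD0.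
  by rewrite -subset0 -HT HsubT orbT.
have HCl : Cl c != set0.
  by case/set0Pn: HT => j; rewrite in_setI => /andP [_ Hj]; apply/set0Pn; exists j.
have [Hmc Hmin] := mcP HCl.
have Hmo : mc c != o := Cl_ne0 Hmc.
case Hm: (mc c \in s).
  have HmT : mc c \in s :&: Cl c by rewrite in_setI Hm Hmc.
  rewrite hb0; last by rewrite Hm !orbT.
  rewrite dD0 add0r H_dbasis /qb H0 /=.
  have HT0 : #|s :&: Cl c| != 0%N by rewrite cards_eq0.
  rewrite (negbTE HT0).
  case: (eqVneq #|s :&: Cl c| 1%N) => H1.
    have HTm : s :&: Cl c = [set mc c].
      have /cards1P [k Hk] : #|s :&: Cl c| == 1%N by apply/eqP.
      by move: (HmT); rewrite Hk in_set1 => /eqP E; rewrite E.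
    have -> : mc c |: (s :\: Cl c) = s.
      apply/setP => k; rewrite in_setU1 in_setD.
      case: (eqVneq k (mc c)) => [->|Hkm] /=; first by rewrite Hm.
      case Hks: (k \in s); rewrite ?andbF ?andbT //.
      apply/negP => Hkc; have : k \in s :&: Cl c by rewrite in_setI Hks Hkc.
      by rewrite HTm in_set1 (negbTE Hkm).
    rewrite subrr subr0; apply: inD_sum => i Hi; rewrite H_dterm hb0 ?scaler0 ?if_same; first exact: inD0.
    case: (eqVneq i (mc c)) => [->|Him].
      apply/orP; left; apply/orP; right; rewrite -subset0.
      apply/subsetP => k; rewrite in_setI in_setD1 => /andP [/andP [Hk Hks] Hkc].
      have : k \in s :&: Cl c by rewrite in_setI Hks Hkc.
      by rewrite HTm in_set1 (negbTE Hk).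
    apply/orP; right; rewrite in_setD1; apply/andP; split; last exact: Hm.
    by apply/eqP => E; move: Him; rewrite E eqxx.
  have [j Hj Hjm] := other_elt HmT H1.
  move: Hj; rewrite in_setI => /andP [Hjs Hjc].
  rewrite subr0 (bigD1 (mc c)) //= big1 ?addr0.
    rewrite H_dterm.
    have -> : cond s (mc c).
      rewrite /P4.cond; apply: (meet_rem Hsim (j := j) (c := c)) => //.
      by apply/eqP => E; move: Hjm; rewrite E eqxx.
    rewrite hbE; last first.
    - by rewrite in_setD1 eqxx.
    - apply/set0Pn; exists j; rewrite in_setI in_setD1 Hjm Hjs Hjc //.
    - by rewrite in_setD1 H0 eq_sym Hmo.
    rewrite setD1K // scalerA sgsq scale1r subrr; exact: inD0.
  move=> i /andP [Hi Him]; rewrite H_dterm hb0 ?scaler0 ?if_same //.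
  apply/orP; right; rewrite in_setD1; apply/andP; split; last exact: Hm.
  by apply/eqP => E; move: Him; rewrite E eqxx.
have Hm' : mc c \notin s by rewrite Hm.
case/set0Pn: (HT) => j; rewrite in_setI => /andP [Hjs Hjc].
have Hjm : j != mc c by apply/eqP => E; move: Hjs; rewrite E Hm.
have Hcm : cond (mc c |: s) (mc c).
  rewrite /P4.cond; apply: (meet_rem Hsim (j := j) (c := c)) => //.
  - by rewrite in_setU1 H0 orbT.
  - by rewrite in_setU1 eqxx.
  - by rewrite in_setU1 Hjs orbT.
  - by rewrite eq_sym.
rewrite (hbE H0 HT Hm') dDZ dD_e dbasisE big_setU1 //= H_dbasis.
rewrite {1}/P4.dterm Hcm setU1K //.
have -> : forall (a b : cc) (q : cc),
   sg (pos (mc c) (mc c |: s)) *: (sg (pos (mc c) (mc c |: s)) *: ebasis s + a) + b - (ebasis s - q)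
   = (sg (pos (mc c) (mc c |: s)) *: a + b) + q.
  move=> a b q; rewrite scalerDr scalerA sgsq scale1r.
  apply/ffunP => t; rewrite !ffunE /=; ring.
rewrite scaler_sumr -big_split /= (eq_bigr (G c s)) //.
have HT0 : #|s :&: Cl c| != 0%N by rewrite cards_eq0.
rewrite /qb H0 /= (negbTE HT0).
case: (eqVneq #|s :&: Cl c| 1%N) => H1.
  have /cards1P [i0 Hi0] : #|s :&: Cl c| == 1%N by apply/eqP.
  have Hi0' : i0 \in s :&: Cl c by rewrite Hi0 set11.
  move: (Hi0'); rewrite in_setI => /andP [Hi0s Hi0c].
  rewrite (bigD1 i0) //= (G_special Hsim Hmono H0 Hm' Hi0).
  have -> : (mc c |: s) :\ i0 = mc c |: (s :\: Cl c).
    apply/setP => k; rewrite in_setD1 !in_setU1 in_setD.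
    case: (eqVneq k (mc c)) => [->|Hkm] /=.
      by rewrite andbT; apply/eqP => E; move: Hm'; rewrite E Hi0s.
    case: (eqVneq k i0) => [->|Hki] /=; first by rewrite Hi0c.
    case Hks: (k \in s); rewrite ?andbT ?andbF //.
    have Hkc : k \notin Cl c.
      apply/negP => Hkc'.
      have : k \in s :&: Cl c by rewrite in_setI Hks Hkc'.
      by rewrite Hi0 in_set1 (negbTE Hki).
    by rewrite Hkc.
  rewrite [X in inD X]addrC addNKr.
  apply: inD_sum => i /andP [Hi Hii0]; apply: (G_inD Hsim) => //.
  rewrite Hi0; apply/eqP => /set1_inj E; by move: Hii0; rewrite E eqxx.
rewrite addr0; apply: inD_sum => i Hi; apply: (G_inD Hsim) => //.
by apply/eqP => E; move: H1; rewrite E cards1 eqxx.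
Qed.

End Homot.

End P6.
Import P6.

Module P7.
Set Implicit Arguments. Unset Strict Implicit. Unset Printing Implicit Defensive.
Import GRing.Theory.
Local Open Scope ring_scope.

Section VhatS.
Variables (l n : nat) (x : 'I_n.+1 -> 'M[Cplx]_l) (cls : 'I_n.+1 -> nat).
Hypothesis Hsim : forall y z : 'I_n.+1, y != ord0 -> z != ord0 ->
         (simA x y z <-> cls y = cls z).
Hypothesis Hmono : forall y z : 'I_n.+1, y != ord0 -> z != ord0 ->
         (y <= z)%N -> (cls y <= cls z)%N.
Notation I := ('I_n.+1).
Notation cc := (cochain n).
Notation o := (@ord0 n).
Notation Cl := (Cl cls).
Notation mc := (mc cls).
Notation hb := (hb cls).
Notation qb := (qb cls).
Notation H := (H cls).

Lemma Iuv_sub (u v : I) : inE_ x u v -> (Iuv x u v <= Vhat x)%VS.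
Proof.
move=> Huv; apply: (subv_trans _ (addvSl _ _)).
apply: (sumv_sup u) => //; exact: (sumv_sup v).
Qed.

Lemma inE_cls (u v : I) : u != o -> v != o -> u != v -> cls u = cls v -> inE_ x u v.
Proof. by move=> Hu Hv Huv Hc; rewrite /inE_ Hu Hv Huv /=; apply/Hsim. Qed.

Lemma Vhat_nr (t : {set I}) (u v : I) : o \in t -> u \in t -> v \in t -> u != o -> v != o ->
  u != v -> cls u = cls v -> ebasis t \in Vhat x.
Proof.
move=> H0 Hu Hv Huo Hvo Huv Hc.
apply: (subvP (Iuv_sub (inE_cls Huo Hvo Huv Hc))).
have HY : t :\: [set o; u; v] \subset ~: [set o; u; v].
  by apply/subsetP => k; rewrite in_setD in_setC => /andP [].
have -> : t = o |: (u |: (v |: (t :\: [set o; u; v]))).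
  apply/setP => k; rewrite !in_setU1 in_setD !inE.
  case: (eqVneq k o) => [->|_] //=; case: (eqVneq k u) => [->|_] //=.
  by case: (eqVneq k v) => [->|_] //=.
apply: (subvP (sumv_sup (t :\: [set o; u; v]) _ (addvSr _ _))) => //.
exact: memv_line.
Qed.

Lemma Vhat_diff (t : {set I}) (u v : I) : o \in t -> u \notin t -> v \notin t -> u != o -> v != o ->
  u != v -> cls u = cls v -> ebasis (u |: t) - ebasis (v |: t) \in Vhat x.
Proof.
move=> H0 Hu Hv Huo Hvo Huv Hc.
apply: (subvP (Iuv_sub (inE_cls Huo Hvo Huv Hc))).
have HY : t :\ o \subset ~: [set o; u; v].
  apply/subsetP => k; rewrite in_setD1 in_setC !inE => /andP [Hk Hkt].
  rewrite (negbTE Hk) /=; apply/negP => /orP [] /eqP E; by move: Hkt; rewrite E ?(negbTE Hu) ?(negbTE Hv).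
have E : forall w, w |: t = o |: (w |: (t :\ o)).
  move=> w; apply/setP => k; rewrite !in_setU1 in_setD1.
  by case: (eqVneq k o) => [->|_] //=; rewrite H0 orbT.
rewrite (E u) (E v).
apply: (subvP (sumv_sup (t :\ o) _ (addvSl _ _))) => //.
exact: memv_line.
Qed.

Lemma inD_Vhat f : inD f -> f \in Vhat x.
Proof.
move=> Hf; rewrite -[f]add0r; apply: memv_add; first exact: mem0v.
by apply/DAprimeP.
Qed.

Lemma lin_Vhat (B : {set I} -> cc) f : (forall s, B s \in Vhat x) -> lin B f \in Vhat x.
Proof. by move=> HB; apply: memv_suml => s _; apply: memvZ. Qed.

Lemma inCl' c (i : I) : i \in Cl c -> (i != o) /\ cls i = c.
Proof. by rewrite inCl => /andP [H1 /eqP H2]. Qed.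

Lemma hb_Vhat c (s : {set I}) : hb c s \in Vhat x.
Proof.
rewrite /P5.hb; case: ifP => [/and3P [H0 HT Hm]|_]; last exact: mem0v.
apply: memvZ.
case/set0Pn: HT => j; rewrite in_setI => /andP [Hjs Hjc].
have HCl : Cl c != set0 by apply/set0Pn; exists j.
have [Hmc _] := mcP HCl.
have [Hmo Hcm] := inCl' Hmc; have [Hjo Hcj] := inCl' Hjc.
apply: (Vhat_nr (u := mc c) (v := j)) => //.
- by rewrite in_setU1 H0 orbT.
- by rewrite in_setU1 eqxx.
- by rewrite in_setU1 Hjs orbT.
- by apply/eqP => E; move: Hm; rewrite E Hjs.
- by rewrite Hcm Hcj.
Qed.

Lemma H_Vhat c f : H c f \in Vhat x.
Proof. apply: lin_Vhat => s; exact: hb_Vhat. Qed.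

Lemma qb_Vhat c (s : {set I}) : ebasis s - qb c s \in Vhat x.
Proof.
rewrite /P5.qb; case: ifP => H0; first by rewrite subrr mem0v.
move/negbFE: H0 => H0.
case: ifP => HT0; first by rewrite subrr mem0v.
have HT : s :&: Cl c != set0 by rewrite -cards_eq0 HT0.
case/set0Pn: (HT) => a Ha.
have HCl : Cl c != set0 by apply/set0Pn; exists a; move: Ha; rewrite in_setI => /andP [].
have [Hmc Hmin] := mcP HCl.
have [Hmo Hcm] := inCl' Hmc.
case: ifP => H1; last first.
  have [j Hj Hja] := other_elt Ha (negbT H1).
  rewrite subr0.
  move: Ha Hj; rewrite !in_setI => /andP [Has Hac] /andP [Hjs Hjc].
  have [Hao Hca] := inCl' Hac; have [Hjo Hcj] := inCl' Hjc.
  apply: (Vhat_nr (u := a) (v := j)) => //; last by rewrite Hca Hcj.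
  by rewrite eq_sym.
have /cards1P [i Hi] : #|s :&: Cl c| == 1%N by [].
have Hi' : i \in s :&: Cl c by rewrite Hi set11.
move: Hi'; rewrite in_setI => /andP [His Hic].
have [Hio Hci] := inCl' Hic.
have Ei : i |: (s :\: Cl c) = s.
  apply/setP => k; rewrite in_setU1 in_setD.
  case: (eqVneq k i) => [->|Hki] //=.
  case Hks: (k \in s); rewrite ?andbT ?andbF //.
  apply/negP => Hkc; have : k \in s :&: Cl c by rewrite in_setI Hks Hkc.
  by rewrite Hi in_set1 (negbTE Hki).
case: (eqVneq i (mc c)) => [Eim|Him].
  by rewrite -{1}Ei Eim subrr mem0v.
rewrite -{1}Ei; apply: Vhat_diff => //.
- by rewrite in_setD H0 andbT; apply/negP; rewrite inCl eqxx.
- by rewrite in_setD Hic.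
- by rewrite in_setD Hmc.
- by rewrite Hci Hcm.
Qed.

Fixpoint Qk (k : nat) (f : cc) : cc := if k is k'.+1 then lin (qb k') (Qk k' f) else f.

Lemma QkD k f g : Qk k (f + g) = Qk k f + Qk k g.
Proof. by elim: k => //= k ->; rewrite linD. Qed.
Lemma QkZ k a f : Qk k (a *: f) = a *: Qk k f.
Proof. by elim: k => //= k ->; rewrite linZ. Qed.
Lemma QkB k f g : Qk k (f - g) = Qk k f - Qk k g.
Proof. by rewrite QkD -scaleN1r QkZ scaleN1r. Qed.
Lemma Qk0 k : Qk k 0 = 0.
Proof. by elim: k => //= k ->; rewrite lin0. Qed.
Lemma Qk_sum k (J : Type) (r : seq J) (P : pred J) (F : J -> cc) :
  Qk k (\sum_(j <- r | P j) F j) = \sum_(j <- r | P j) Qk k (F j).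
Proof.
elim/big_rec2: _ => [|j y1 y2 _ <-]; first exact: Qk0.
by rewrite QkD.
Qed.

Lemma qb_out c (s : {set I}) : o \notin s -> qb c s = ebasis s.
Proof. by rewrite /P5.qb => ->. Qed.

Lemma lin_qb_inD c f : inD f -> lin (qb c) f = f.
Proof.
move=> Hf; rewrite -{2}(lin_id f); apply: eq_bigr => s _.
case H0: (o \in s); first by rewrite Hf // !scale0r.
by rewrite qb_out ?H0.
Qed.

Lemma Qk_inD k f : inD f -> Qk k f = f.
Proof. by move=> Hf; elim: k => //= k ->; rewrite lin_qb_inD. Qed.

Lemma inD_linqb c f : inD f -> inD (lin (qb c) f).
Proof. by move=> Hf; rewrite lin_qb_inD. Qed.

Lemma Qk_Vhat k f : f - Qk k f \in Vhat x.
Proof.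
elim: k => [|k IH] /=; first by rewrite subrr mem0v.
have -> : f - lin (qb k) (Qk k f) = (f - Qk k f) + (Qk k f - lin (qb k) (Qk k f)).
  by rewrite addrA subrK.
apply: memvD => //.
set g := Qk k f.
have -> : g - lin (qb k) g = lin (fun s => ebasis s - qb k s) g.
  by rewrite -{1}(lin_id g) /lin -sumrB; apply: eq_bigr => s _; rewrite scalerBr.
apply: lin_Vhat => s; exact: qb_Vhat.
Qed.

End VhatS.

End P7.
Import P7.

Module P8.
Set Implicit Arguments. Unset Strict Implicit. Unset Printing Implicit Defensive.
Import GRing.Theory.
Local Open Scope ring_scope.

Section Kinv.
Variables (l n : nat) (x : 'I_n.+1 -> 'M[Cplx]_l) (cls : 'I_n.+1 -> nat).
Hypothesis Hsim : forall y z : 'I_n.+1, y != ord0 -> z != ord0 ->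
         (simA x y z <-> cls y = cls z).
Hypothesis Hmono : forall y z : 'I_n.+1, y != ord0 -> z != ord0 ->
         (y <= z)%N -> (cls y <= cls z)%N.
Notation I := ('I_n.+1).
Notation cc := (cochain n).
Notation o := (@ord0 n).
Notation Cl := (Cl cls).
Notation mc := (mc cls).
Notation qb := (qb cls).
Notation Qk := (Qk cls).

Lemma o_notCl c : o \notin Cl c.
Proof. by rewrite inCl eqxx. Qed.

Lemma notCl_cls (w : I) c : w != o -> cls w != c -> w \notin Cl c.
Proof. by move=> Hw Hc; rewrite inCl Hw Hc. Qed.

Lemma qb_shift k (t : {set I}) (w : I) : o \in t -> w \notin Cl k ->
  qb k (w |: t) = if #|t :&: Cl k| == 0%N then ebasis (w |: t)
                  else if #|t :&: Cl k| == 1%N then ebasis (w |: (mc k |: (t :\: Cl k)))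
                  else 0.
Proof.
move=> H0 Hw.
have E1 : (w |: t) :&: Cl k = t :&: Cl k.
  by apply/setP => j; rewrite !in_setI in_setU1; case: (eqVneq j w) => [->|] //=; rewrite (negbTE Hw) andbF.
have E2 : mc k |: ((w |: t) :\: Cl k) = w |: (mc k |: (t :\: Cl k)).
  apply/setP => j; rewrite !in_setU1 !in_setD in_setU1.
  case: (eqVneq j w) => [->|] /=; first by rewrite Hw orbT.
  by [].
by rewrite /P5.qb in_setU1 H0 orbT /= E1 E2.
Qed.

Lemma qb_in k (t : {set I}) (w : I) : o \in t -> w \in Cl k -> w \notin t ->
  qb k (w |: t) = if t :&: Cl k == set0 then ebasis (mc k |: (t :\: Cl k)) else 0.
Proof.
move=> H0 Hw Hwt.
have E1 : (w |: t) :&: Cl k = w |: (t :&: Cl k).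
  by apply/setP => j; rewrite !in_setI !in_setU1 in_setI; case: (eqVneq j w) => [->|] //=.
have E2 : (w |: t) :\: Cl k = t :\: Cl k.
  by apply/setP => j; rewrite !in_setD in_setU1; case: (eqVneq j w) => [->|] //=; rewrite Hw.
rewrite /P5.qb in_setU1 H0 orbT /= E1 E2 cardsU1 in_setI (negbTE Hwt) /=.
case: (eqVneq (t :&: Cl k) set0) => [->|HT]; first by rewrite cards0.
have : (0 < #|t :&: Cl k|)%N by rewrite card_gt0.
by case: #|t :&: Cl k| => [|[|j]].
Qed.

Lemma inCl_c (w : I) c : w != o -> cls w = c -> w \in Cl c.
Proof. by move=> Hw Hc; rewrite inCl Hw Hc eqxx. Qed.

Lemma Q_nr (t : {set I}) (u v : I) : o \in t -> u \in t -> v \in t -> u != o -> v != o ->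
  u != v -> cls u = cls v -> forall k, Qk k (ebasis t) = 0 \/
  ((k <= cls u)%N /\ exists2 t', Qk k (ebasis t) = ebasis t' & [&& o \in t', u \in t' & v \in t']).
Proof.
move=> H0 Hu Hv Huo Hvo Huv Hc; elim=> [|k IH] /=.
  by right; split => //; exists t => //; rewrite H0 Hu Hv.
case: IH => [->|[Hk [t' -> /and3P [H0' Hu' Hv']]]]; first by left; rewrite lin0.
rewrite lin_e; case: (eqVneq k (cls u)) => [Ek|Nk].
  left; rewrite /P5.qb H0' /=.
  have H2 : (2 <= #|t' :&: Cl k|)%N.
    have Hsub : [set u; v] \subset t' :&: Cl k.
      apply/subsetP => j; rewrite !inE => /orP [] /eqP ->.
        by rewrite Hu' Huo Ek eqxx.
      by rewrite Hv' Hvo Ek Hc eqxx.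
    by have := subset_leq_card Hsub; rewrite cards2 Huv.
  by move: H2; case: #|t' :&: Cl k| => [|[|j]].
have Hk' : (k < cls u)%N by rewrite ltn_neqAle Hk andbT Nk.
have HuCl : u \notin Cl k by apply: notCl_cls => //; rewrite eq_sym.
have HvCl : v \notin Cl k by apply: notCl_cls => //; rewrite -Hc eq_sym.
rewrite /P5.qb H0' /=.
case: ifP => _; first by right; split => //; exists t' => //; rewrite H0' Hu' Hv'.
case: ifP => _; last by left.
right; split => //; exists (mc k |: (t' :\: Cl k)) => //.
by rewrite !in_setU1 !in_setD H0' Hu' Hv' o_notCl (negbTE HuCl) (negbTE HvCl) !orbT.
Qed.

Lemma mc_neq k (w : I) : w \notin Cl k -> w != o -> w != mc k.
Proof.
move=> Hw Hwo; case: (eqVneq (Cl k) set0) => HCl.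
  by rewrite /P3.mc; case: pickP => [i0|_] //; rewrite HCl in_set0.
have [Hmc _] := mcP HCl.
by apply/eqP => E; move: Hw; rewrite E Hmc.
Qed.

Lemma Q_diff (t : {set I}) (u v : I) : o \in t -> u \notin t -> v \notin t -> u != o -> v != o ->
  u != v -> cls u = cls v -> forall k, Qk k (ebasis (u |: t) - ebasis (v |: t)) = 0 \/
  ((k <= cls u)%N /\ exists2 t', Qk k (ebasis (u |: t) - ebasis (v |: t)) =
      ebasis (u |: t') - ebasis (v |: t') & [&& o \in t', u \notin t' & v \notin t']).
Proof.
move=> H0 Hu Hv Huo Hvo Huv Hc; elim=> [|k IH] /=.
  by right; split => //; exists t => //; rewrite H0 Hu Hv.
case: IH => [->|[Hk [t' -> /and3P [H0' Hu' Hv']]]]; first by left; rewrite lin0.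
rewrite linB !lin_e; case: (eqVneq k (cls u)) => [Ek|Nk].
  have HuCl : u \in Cl k by rewrite Ek inCl_c.
  have HvCl : v \in Cl k by rewrite Ek inCl_c.
  by left; rewrite !qb_in //; case: ifP => _; rewrite subrr.
have Hk' : (k < cls u)%N by rewrite ltn_neqAle Hk andbT Nk.
have HuCl : u \notin Cl k by apply: notCl_cls => //; rewrite eq_sym.
have HvCl : v \notin Cl k by apply: notCl_cls => //; rewrite -Hc eq_sym.
rewrite !qb_shift //.
case: ifP => _; first by right; split => //; exists t' => //; rewrite H0' Hu' Hv'.
case: ifP => _; last by left; rewrite subrr.
right; split => //; exists (mc k |: (t' :\: Cl k)) => //.
rewrite !in_setU1 !in_setD H0' o_notCl (negbTE Hu') (negbTE Hv') /= !orbT !andbF !orbF /=.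
by rewrite (mc_neq HuCl Huo) (mc_neq HvCl Hvo).
Qed.

Lemma inE_prop (u v : I) : inE_ x u v -> [/\ u != o, v != o, u != v & cls u = cls v].
Proof. by case/and4P => Hu Hv Huv Hs; split => //; apply/(Hsim Hu Hv). Qed.

Lemma Iuv_K N (u v : I) w : (forall i : I, (cls i < N)%N) -> inE_ x u v ->
  w \in Iuv x u v -> inD (Qk N w).
Proof.
move=> HN /inE_prop [Huo Hvo Huv Hc] /memv_sumP [zs Hzs ->].
rewrite Qk_sum; apply: inD_sum => Y HY.
have HYo : o \notin Y by apply/negP => H; move: (subsetP HY o H); rewrite !inE eqxx.
have HYu : u \notin Y by apply/negP => H; move: (subsetP HY u H); rewrite !inE eqxx orbT.
have HYv : v \notin Y by apply/negP => H; move: (subsetP HY v H); rewrite !inE eqxx !orbT.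
case/memv_addP: (Hzs Y HY) => a /vlineP [al ->] [b /vlineP [be ->] ->].
rewrite QkD !QkZ; apply: inDD; apply: inDZ.
  have E : forall w', o |: (w' |: Y) = w' |: (o |: Y).
    by move=> w'; apply/setP => j; rewrite !in_setU1 orbCA.
  rewrite !E.
  have Hu' : u \notin o |: Y by rewrite in_setU1 negb_or HYu andbT; apply/eqP => E1; move: Huo; rewrite E1 eqxx.
  have Hv' : v \notin o |: Y by rewrite in_setU1 negb_or HYv andbT; apply/eqP => E1; move: Hvo; rewrite E1 eqxx.
  have := Q_diff (t := o |: Y) (setU11 _ _) Hu' Hv' Huo Hvo Huv Hc N.
  case => [->|[HN' _]]; first exact: inD0.
  by move: (HN u); rewrite ltnNge HN'.
have H1 : o \in o |: (u |: (v |: Y)) by rewrite in_setU1 eqxx.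
have H2 : u \in o |: (u |: (v |: Y)) by rewrite !in_setU1 eqxx orbT.
have H3 : v \in o |: (u |: (v |: Y)) by rewrite !in_setU1 eqxx !orbT.
have := Q_nr H1 H2 H3 Huo Hvo Huv Hc N.
case => [->|[HN' _]]; first exact: inD0.
by move: (HN u); rewrite ltnNge HN'.
Qed.

Lemma Vhat_K N f : (forall i : I, (cls i < N)%N) -> f \in Vhat x -> inD (Qk N f).
Proof.
move=> HN /memv_addP [a Ha [b /DAprimeP Hb ->]].
rewrite QkD [Qk N b]Qk_inD //; apply: inDD => //.
case/memv_sumP: Ha => vs Hvs ->; rewrite Qk_sum; apply: inD_sum => u _.
case/memv_sumP: (Hvs u isT) => ws Hws ->; rewrite Qk_sum; apply: inD_sum => v Huv.
exact: (Iuv_K HN Huv (Hws v Huv)).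
Qed.

End Kinv.

End P8.
Import P8.

Module P9.
Set Implicit Arguments. Unset Strict Implicit. Unset Printing Implicit Defensive.
Import GRing.Theory.
Local Open Scope ring_scope.

Section Final.
Variables (l n : nat) (x : 'I_n.+1 -> 'M[Cplx]_l) (cls : 'I_n.+1 -> nat).
Hypothesis Hsim : forall y z : 'I_n.+1, y != ord0 -> z != ord0 ->
         (simA x y z <-> cls y = cls z).
Hypothesis Hmono : forall y z : 'I_n.+1, y != ord0 -> z != ord0 ->
         (y <= z)%N -> (cls y <= cls z)%N.
Notation I := ('I_n.+1).
Notation cc := (cochain n).
Notation o := (@ord0 n).
Notation Cl := (Cl cls).
Notation mc := (mc cls).
Notation hb := (hb cls).
Notation qb := (qb cls).
Notation H := (H cls).
Notation Qk := (Qk cls).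

Lemma HD c f g : H c (f + g) = H c f + H c g. Proof. exact: linD. Qed.
Lemma HB c f g : H c (f - g) = H c f - H c g. Proof. exact: linB. Qed.

Lemma H_inD c f : inD f -> H c f = 0.
Proof.
move=> Hf; rewrite /P5.H /lin big1 // => s _.
case H0: (o \in s); first by rewrite Hf // scale0r.
by rewrite hb0 ?H0 // scaler0.
Qed.

Lemma inD_lin_all (B : {set I} -> cc) f : (forall s, inD (B s)) -> inD (lin B f).
Proof. by move=> HB; apply: inD_sum => s _; apply: inDZ. Qed.

Lemma homot_lin c g : inD (dD x (H c g) + H c (dD x g) - (g - lin (qb c) g)).
Proof.
have -> : dD x (H c g) + H c (dD x g) - (g - lin (qb c) g) =
  lin (fun s => dD x (hb c s) + H c (dbasis x s) - (ebasis s - qb c s)) g.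
  have E : forall (B1 B2 B3 B4 : {set I} -> cc),
    lin B1 g + lin B2 g - (lin B3 g - lin B4 g) = lin (fun s => B1 s + B2 s - (B3 s - B4 s)) g.
    move=> B1 B2 B3 B4; rewrite /lin -!sumrB -big_split -sumrB /=; apply: eq_bigr => s _.
    by rewrite scalerBr scalerDr scalerBr.
  have E1 : dD x (H c g) = lin (fun s => dD x (hb c s)) g by exact: lin_comp.
  have E2 : H c (dD x g) = lin (fun s => H c (dbasis x s)) g by exact: lin_comp.
  by rewrite E1 E2 -E lin_id.
apply: inD_lin_all => s; exact: homot.
Qed.

Lemma homog_H c k f : homog x k f -> homog x (k - 1) (H c f).
Proof.
move=> Hf; apply: (homog_lin Hf) => s Hs.
rewrite /P5.hb; case: ifP => [/and3P [H0 HT Hm]|_]; last exact: homog0.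
apply: homogZ.
case/set0Pn: HT => j; rewrite in_setI => /andP [Hjs Hjc].
have HCl : Cl c != set0 by apply/set0Pn; exists j.
have [Hmc _] := mcP HCl.
have Hjm : j != mc c by apply/eqP => E; move: Hm; rewrite -E Hjs.
have : deg x (mc c |: s) = deg x s - 1.
  have Hmeet := meet_rem Hsim (s := mc c |: s) (i := mc c) (j := j) (c := c).
  rewrite setU1K // in Hmeet.
  have Hm' : (meet x s == meet x (mc c |: s))%MS.
    apply: Hmeet => //.
    - by rewrite in_setU1 H0 orbT.
    - by rewrite in_setU1 eqxx.
    - by rewrite in_setU1 Hjs orbT.
    - by rewrite eq_sym.
  rewrite /deg /codim -(eqmx_rank Hm') cardsU1 Hm /= PoszD; ring.
by move=> E; rewrite -Hs -E; exact: homog_e.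
Qed.

Fixpoint fs (f : cc) (k : nat) : cc :=
  if k is k'.+1 then fs f k' - dD x (H k' (fs f k')) else f.

Definition gs (f : cc) (k : nat) : cc := \sum_(c < k) H c (fs f c).

Lemma fs_eq f k : fs f k = f - dD x (gs f k).
Proof.
elim: k => [|k IH] /=; first by rewrite /gs big_ord0 dD0 subr0.
rewrite [in RHS]/gs big_ord_recr /= dDD opprD addrA; congr (_ - _); exact: IH.
Qed.

Lemma fs_d f k : dD x (fs f k) = dD x f.
Proof. by elim: k => [|k IH] //=; rewrite dDB dd subr0. Qed.

Lemma fs_homog f k0 k : homog x k0 f -> homog x k0 (fs f k).
Proof.
move=> Hf; elim: k => [|k IH] //=; apply: homogB => //.
by have := homog_dD (homog_H (c := k) IH); rewrite subrK.
Qed.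

Lemma fs_Q f k : inD (dD x f) -> inD (fs f k - Qk k f).
Proof.
move=> Hdf; elim: k => [|k IH] /=; first by rewrite subrr; exact: inD0.
set g := fs f k.
have -> : g - dD x (H k g) - lin (qb k) (Qk k f) =
   (g - dD x (H k g) - lin (qb k) g) + lin (qb k) (g - Qk k f).
  by rewrite linB addrA subrK.
apply: inDD; last by rewrite lin_qb_inD.
have := homot_lin k g; rewrite (H_inD _ (f := dD x g)); last by rewrite fs_d.
rewrite addr0 => /inDN; rewrite opprB.
have -> : g - lin (qb k) g - dD x (H k g) = g - dD x (H k g) - lin (qb k) g.
  by rewrite -!addrA [- _ + _]addrC.
done.
Qed.

Lemma clause2 (k : int) (f : cc) :
  f \in Vhat x -> homog x k f -> dD x f \in DAprime n ->
  exists g : cc, [/\ g \in Vhat x, homog x (k - 1) g & f - dD x g \in DAprime n].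
Proof.
move=> Hf Hk /DAprimeP Hd.
pose N := (\max_(i : I) cls i).+1.
have HN : forall i : I, (cls i < N)%N by move=> i; rewrite ltnS; exact: (leq_bigmax i).
exists (gs f N); split.
- by apply: memv_suml => c _; exact: H_Vhat.
- by apply: homog_sum => c _; apply: homog_H; exact: fs_homog.
apply/DAprimeP; rewrite -fs_eq.
have := fs_Q N Hd; have := Vhat_K Hsim HN Hf => H1 H2.
by rewrite -(subrK (Qk N f) (fs f N)); apply: inDD.
Qed.

Definition pc (c : nat) (g : cc) : cc := g - dD x (H c g) - H c (dD x g).

Fixpoint Pk (k : nat) (g : cc) : cc := if k is k'.+1 then pc k' (Pk k' g) else g.

Lemma pc_d c g : dD x (pc c g) = pc c (dD x g).
Proof. by rewrite /pc !dDB !dd (_ : H c 0 = 0) ?subr0 //; exact: lin0. Qed.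

Lemma Pk_d k g : dD x (Pk k g) = Pk k (dD x g).
Proof. by elim: k => //= k <-; rewrite pc_d. Qed.

Lemma pc_q c g : inD (pc c g - lin (qb c) g).
Proof.
have := inDN (homot_lin c g); congr inD.
rewrite /pc; apply/ffunP => t; rewrite !ffunE /=; ring.
Qed.

Lemma Pk_Q k g : inD (Pk k g - Qk k g).
Proof.
elim: k => [|k IH] /=; first by rewrite subrr; exact: inD0.
have -> : pc k (Pk k g) - lin (qb k) (Qk k g) =
  (pc k (Pk k g) - lin (qb k) (Pk k g)) + lin (qb k) (Pk k g - Qk k g).
  by rewrite linB addrA subrK.
by apply: inDD; [exact: pc_q | rewrite lin_qb_inD].
Qed.

Lemma clause1 f : f \in Vhat x -> dD x f \in Vhat x.
Proof.
move=> Hf.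
pose N := (\max_(i : I) cls i).+1.
have HN : forall i : I, (cls i < N)%N by move=> i; rewrite ltnS; exact: (leq_bigmax i).
have H1 : inD (Qk N f) := Vhat_K Hsim HN Hf.
have H2 : inD (Pk N f) by rewrite -(subrK (Qk N f) (Pk N f)); apply: inDD => //; exact: Pk_Q.
have H3 : inD (Qk N (dD x f)).
  rewrite -(subrK (Pk N (dD x f)) (Qk N (dD x f))) -Pk_d; apply: inDD; last exact: inD_dD.
  rewrite Pk_d -opprB; apply: inDN; exact: Pk_Q.
have -> : dD x f = (dD x f - Qk N (dD x f)) + Qk N (dD x f) by rewrite subrK.
apply: memvD; first exact: Qk_Vhat.
exact: inD_Vhat.
Qed.

End Final.

End P9.
Import P9.

Unset Implicit Arguments.
Local Open Scope ring_scope.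

Theorem lemma3p4 (l n : nat) (x : 'I_n.+1 -> 'M[Cplx]_l)
  (Harr : is_arrangement x)
  (Horder : exists cls : 'I_n.+1 -> nat,
      (forall y z : 'I_n.+1, y != ord0 -> z != ord0 ->
         (simA x y z <-> cls y = cls z)) /\
      (forall y z : 'I_n.+1, y != ord0 -> z != ord0 ->
         (y <= z)%N -> (cls y <= cls z)%N)) :
  (* d(V) \subseteq V *)
  (forall f : cochain n, f \in Vhat x -> dD x f \in Vhat x) /\
  (* V is acyclic: in every degree k, every cocycle of V is a coboundary of V *)
  (forall (k : int) (f : cochain n),
      f \in Vhat x -> homog x k f -> dD x f \in DAprime n ->
      exists g : cochain n,
        [/\ g \in Vhat x, homog x (k - 1) g & f - dD x g \in DAprime n]).
Proof.
case: Horder => cls [Hsim Hmono]; split.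
- by move=> f; exact: (clause1 Hsim Hmono).
- by move=> k f; exact: (clause2 Hsim Hmono).
Qed.
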